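(* Define $A_0=E_1$ and $B_0=E_2F_3q^{-G_1-G_3}-q^{-1}F_3q^{-G_1-G_3}E_2$, let $X=A_0B_0-q^{-2}B_0A_0$, and recursively for $k\ge1$ $$A_k=[2]_q^{-1}(A_{k-1}X-XA_{k-1}),\qquad B_k=[2]_q^{-1}(XB_{k-1}-B_{k-1}X).$$ Let $\mathcal E_\alpha(\zeta)=\sum_{k\ge0}A_k\zeta^k$, $\mathcal E_{\delta-\alpha}(\zeta)=\sum_{k\ge0}B_k\zeta^k$ and $\mathcal E'_\alpha(\zeta)=\zeta\bigl(\mathcal E_\alpha(\zeta)B_0-q^{-2}B_0\mathcal E_\alpha(\zeta)\bigr)$. Then in $\mathrm U_q(\mathfrak{gl}_3)[[\zeta]]$: (i) $B_0=F_1q^{-G_1-G_2}$; (ii) $\mathcal E_\alpha(\zeta)=\kappa_q^{-1}N'_{21}N'_{11}(-q^{-2}\zeta)^{-1}$; (iii) $\mathcal E_{\delta-\alpha}(\zeta)=\kappa_q^{-1}q^{-1}N'_{11}(-q^{-2}\zeta)^{-1}N'_{12}$; (iv) $1+\kappa_q\mathcal E'_\alpha(\zeta)=N'_{11}(-q^{-2}\zeta)^{-1}N''_{22}(-q^{-2}\zeta)$.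
   Context: Setting: $\hbar\in\mathbb C$, $q=e^\hbar$, $q^2\neq1$, $\kappa_q=q-q^{-1}$, $[\nu]_q=(q^\nu-q^{-\nu})/\kappa_q$ (so $[2]_q=q+q^{-1}$, assumed nonzero). Let $\mathfrak g=\mathbb CG_1\oplus\mathbb CG_2\oplus\mathbb CG_3$ and define linear forms $\alpha_1,\alpha_2$ on $\mathfrak g$ by $\alpha_1(G_1)=1,\alpha_1(G_2)=-1,\alpha_1(G_3)=0$, $\alpha_2(G_1)=0,\alpha_2(G_2)=1,\alpha_2(G_3)=-1$; put $H_1=G_1-G_2$, $H_2=G_2-G_3$. $\mathrm U_q(\mathfrak{gl}_3)$ is the unital associative $\mathbb C$-algebra generated by $E_1,E_2,F_1,F_2$ and symbols $q^X$, $X\in\mathfrak g$, with relations $q^0=1$, $q^{X_1}q^{X_2}=q^{X_1+X_2}$, $q^XE_iq^{-X}=q^{\alpha_i(X)}E_i$, $q^XF_iq^{-X}=q^{-\alpha_i(X)}F_i$, $[E_i,F_j]=\delta_{ij}(q^{H_i}-q^{-H_i})/\kappa_q$, and for $i\ne j$ the $q$-Serre relations $E_i^2E_j-[2]_qE_iE_jE_i+E_jE_i^2=0$, $F_i^2F_j-[2]_qF_iF_jF_i+F_jF_i^2=0$. For $\nu\in\mathbb C$ one writes $q^{X+\nu}=q^\nu q^X$. Further $E_3=E_1E_2-q^{-1}E_2E_1$, $F_3=F_2F_1-qF_1F_2$. Matrix entries: in $\mathrm U_q(\mathfrak{gl}_3)[[\zeta]]$ ($\zeta$ a formal variable; series with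 constant term $1$ are invertible) let $N'_{11}(\zeta)=1-\zeta q^{-2G_1}$, $N'_{22}(\zeta)=1-\zeta q^{-2G_2}$, $N'_{33}(\zeta)=1-\zeta q^{-2G_3}$, $N'_{12}=\kappa_q qF_1q^{-G_1-G_2}$, $N'_{23}=\kappa_q qF_2q^{-G_2-G_3}$, $N'_{13}=\kappa_q qF_3q^{-G_1-G_3}$, $N'_{21}=\kappa_qE_1$, $N'_{32}=\kappa_qE_2$, $N'_{31}=\kappa_qE_3$; and $N''_{22}(\zeta)=N'_{22}(\zeta)-\zeta N'_{21}N'_{11}(\zeta)^{-1}N'_{12}$, $N''_{23}(\zeta)=N'_{23}-N'_{21}N'_{11}(\zeta)^{-1}N'_{13}$, $N''_{32}(\zeta)=N'_{32}-\zeta N'_{31}N'_{11}(\zeta)^{-1}N'_{12}$, $N''_{33}(\zeta)=N'_{33}(\zeta)-\zeta N'_{31}N'_{11}(\zeta)^{-1}N'_{13}$, $N'''_{33}(\zeta)=N''_{33}(\zeta)-\zeta N''_{32}(\zeta)N''_{22}(\zeta)^{-1}N''_{23}(\zeta)$. For $c\in\mathbb C$, $N(c\zeta)$ denotes substitution $\zeta\mapsto c\zeta$. (Interpretation: $A_k$, $B_k$ are the images under Jimbo's evaluation homomorphism of the Khoroshkin–Tolstoy root vectors $e_{\alpha+k\delta}$, $e_{(\delta-\alpha)+k\delta}$ of $\mathrm U_q(\mathcal L(\mathfrak{sl}_3))$; this is not needed for the statement.) *)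

(* Defs.v *)
From HB Require Import structures.
From mathcomp Require Import all_boot all_order all_algebra.
Set Implicit Arguments. Unset Strict Implicit. Unset Printing Implicit Defensive.
Import Order.TTheory GRing.Theory.
Local Open Scope ring_scope.

Section PowerSeries.
Variable R : nzRingType.

Definition ps := nat -> R.

Definition psC (a : R) : ps := fun n => if n is 0%N then a else 0.
Definition ps1 : ps := psC 1.
Definition psadd (f g : ps) : ps := fun n => f n + g n.
Definition psopp (f : ps) : ps := fun n => - f n.
Definition psmul (f g : ps) : ps :=
  fun n => \sum_(i < n.+1) f i * g (n - i)%N.
Definition psshift (f : ps) : ps := fun n => if n is n'.+1 then f n' else 0.

(* inverse of a series with constant term 1: b_0 = 1,
   b_n = - sum_{k<n} a_{n-k} b_k  (so that a * b = 1) *)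
Fixpoint psinv_seq (a : ps) (n : nat) : seq R :=
  match n with
  | 0 => [:: 1]
  | n'.+1 => let s := psinv_seq a n' in
             rcons s (- \sum_(k < n'.+1) a (n'.+1 - k)%N * nth 0 s k)
  end.
Definition psinv (a : ps) : ps := fun n => nth 0 (psinv_seq a n) n.
End PowerSeries.

Section PowerSeriesAlg.
Variables (K : fieldType) (A : algType K).
Definition psscale (c : K) (f : ps A) : ps A := fun n => c *: f n.
Definition pssubst (c : K) (f : ps A) : ps A := fun n => (c ^+ n) *: f n.
End PowerSeriesAlg.

(* [e] plays the role of nu |-> q^nu = exp(hbar nu); q := e 1.
   [Q x1 x2 x3] plays the role of q^X for X = x1 G1 + x2 G2 + x3 G3. *)
Section Uq.
Variables (K : fieldType) (A : algType K).
Variable e : K -> K.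
Variables (E1 E2 F1 F2 : A) (Q : K -> K -> K -> A).

Definition qq : K := e 1.
Definition kappa : K := qq - qq^-1.
Definition qint2 : K := qq + qq^-1.

Definition is_qexp : Prop :=
  e 0 = 1 /\ forall x y, e (x + y) = e x * e y.

Definition Uqgl3_rel : Prop :=
  [/\ Q 0 0 0 = 1,
      (forall x1 x2 x3 y1 y2 y3,
          Q (x1 + y1) (x2 + y2) (x3 + y3) = Q x1 x2 x3 * Q y1 y2 y3),
      (forall x1 x2 x3,
         [/\ Q x1 x2 x3 * E1 * Q (- x1) (- x2) (- x3) = e (x1 - x2) *: E1,
             Q x1 x2 x3 * E2 * Q (- x1) (- x2) (- x3) = e (x2 - x3) *: E2,
             Q x1 x2 x3 * F1 * Q (- x1) (- x2) (- x3) = e (- (x1 - x2)) *: F1 &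
             Q x1 x2 x3 * F2 * Q (- x1) (- x2) (- x3) = e (- (x2 - x3)) *: F2]),
      [/\ E1 * F1 - F1 * E1 = kappa^-1 *: (Q 1 (-1) 0 - Q (-1) 1 0),
          E2 * F2 - F2 * E2 = kappa^-1 *: (Q 0 1 (-1) - Q 0 (-1) 1),
          E1 * F2 - F2 * E1 = 0 &
          E2 * F1 - F1 * E2 = 0] &
      [/\ E1 ^+ 2 * E2 - qint2 *: (E1 * E2 * E1) + E2 * E1 ^+ 2 = 0,
          E2 ^+ 2 * E1 - qint2 *: (E2 * E1 * E2) + E1 * E2 ^+ 2 = 0,
          F1 ^+ 2 * F2 - qint2 *: (F1 * F2 * F1) + F2 * F1 ^+ 2 = 0 &
          F2 ^+ 2 * F1 - qint2 *: (F2 * F1 * F2) + F1 * F2 ^+ 2 = 0]].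

Definition E3 : A := E1 * E2 - qq^-1 *: (E2 * E1).
Definition F3 : A := F2 * F1 - qq *: (F1 * F2).

Definition N'11 : ps A := fun n =>
  match n with 0 => 1 | 1 => - Q (-2) 0 0 | _ => 0 end.
Definition N'22 : ps A := fun n =>
  match n with 0 => 1 | 1 => - Q 0 (-2) 0 | _ => 0 end.
Definition N'33 : ps A := fun n =>
  match n with 0 => 1 | 1 => - Q 0 0 (-2) | _ => 0 end.
Definition N'12 : A := kappa *: (qq *: (F1 * Q (-1) (-1) 0)).
Definition N'23 : A := kappa *: (qq *: (F2 * Q 0 (-1) (-1))).
Definition N'13 : A := kappa *: (qq *: (F3 * Q (-1) 0 (-1))).
Definition N'21 : A := kappa *: E1.
Definition N'32 : A := kappa *: E2.
Definition N'31 : A := kappa *: E3.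

Definition N''22 : ps A :=
  psadd N'22 (psopp (psshift
    (psmul (psmul (psC N'21) (psinv N'11)) (psC N'12)))).

Definition A0 : A := E1.
Definition B0 : A :=
  E2 * F3 * Q (-1) 0 (-1) - qq^-1 *: (F3 * Q (-1) 0 (-1) * E2).
Definition Xel : A := A0 * B0 - qq^-2 *: (B0 * A0).
Fixpoint Ak (k : nat) : A :=
  if k is k'.+1 then qint2^-1 *: (Ak k' * Xel - Xel * Ak k') else A0.
Fixpoint Bk (k : nat) : A :=
  if k is k'.+1 then qint2^-1 *: (Xel * Bk k' - Bk k' * Xel) else B0.

Definition Ealpha : ps A := Ak.
Definition Edeltaalpha : ps A := Bk.
Definition E'alpha : ps A :=
  psshift (fun n => Ealpha n * B0 - qq^-2 *: (B0 * Ealpha n)).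
End Uq.

(* Main.v *)
Require Import Defs.
From HB Require Import structures.
From mathcomp Require Import all_boot all_order all_algebra ring.
Set Implicit Arguments. Unset Strict Implicit. Unset Printing Implicit Defensive.
Import GRing.Theory.
Local Open Scope ring_scope.

Definition lin (K : fieldType) (V : lmodType K) (W : V * V * V * V * V * V)
  (a1 a2 a3 a4 a5 a6 : K) : V :=
  a1 *: W.1.1.1.1.1 + (a2 *: W.1.1.1.1.2 + (a3 *: W.1.1.1.2 + (a4 *: W.1.1.2
  + (a5 *: W.1.2 + a6 *: W.2)))).
Lemma linD (K : fieldType) (V : lmodType K) W a1 a2 a3 a4 a5 a6 b1 b2 b3 b4 b5 b6 :
  @lin K V W a1 a2 a3 a4 a5 a6 + lin W b1 b2 b3 b4 b5 b6 =
  lin W (a1 + b1) (a2 + b2) (a3 + b3) (a4 + b4) (a5 + b5) (a6 + b6).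
Proof. rewrite /lin !scalerDl. by do 5 (rewrite [LHS]addrACA; f_equal). Qed.
Lemma linN (K : fieldType) (V : lmodType K) W a1 a2 a3 a4 a5 a6 :
  - @lin K V W a1 a2 a3 a4 a5 a6 = lin W (-a1) (-a2) (-a3) (-a4) (-a5) (-a6).
Proof. by rewrite /lin !opprD !scaleNr. Qed.
Lemma linZ (K : fieldType) (V : lmodType K) W k a1 a2 a3 a4 a5 a6 :
  k *: @lin K V W a1 a2 a3 a4 a5 a6 = lin W (k*a1) (k*a2) (k*a3) (k*a4) (k*a5) (k*a6).
Proof. by rewrite /lin !scalerDr !scalerA. Qed.
Lemma linE (K : fieldType) (V : lmodType K) W a1 a2 a3 a4 a5 a6 b1 b2 b3 b4 b5 b6 :
  a1 = b1 -> a2 = b2 -> a3 = b3 -> a4 = b4 -> a5 = b5 -> a6 = b6 ->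
  @lin K V W a1 a2 a3 a4 a5 a6 = lin W b1 b2 b3 b4 b5 b6.
Proof. by move=> -> -> -> -> -> ->. Qed.
Lemma lin1 (K : fieldType) (V : lmodType K) (x1 x2 x3 x4 x5 x6 : V) :
  x1 = lin (x1,x2,x3,x4,x5,x6) 1 0 0 0 0 0.
Proof. by rewrite /lin /= scale1r !scale0r !addr0. Qed.
Lemma lin2 (K : fieldType) (V : lmodType K) (x1 x2 x3 x4 x5 x6 : V) :
  x2 = lin (x1,x2,x3,x4,x5,x6) 0 1 0 0 0 0.
Proof. by rewrite /lin /= scale1r !scale0r !addr0 add0r. Qed.
Lemma lin3 (K : fieldType) (V : lmodType K) (x1 x2 x3 x4 x5 x6 : V) :
  x3 = lin (x1,x2,x3,x4,x5,x6) 0 0 1 0 0 0.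
Proof. by rewrite /lin /= scale1r !scale0r !addr0 !add0r. Qed.
Lemma lin4 (K : fieldType) (V : lmodType K) (x1 x2 x3 x4 x5 x6 : V) :
  x4 = lin (x1,x2,x3,x4,x5,x6) 0 0 0 1 0 0.
Proof. by rewrite /lin /= scale1r !scale0r !addr0 !add0r. Qed.
Lemma lin5 (K : fieldType) (V : lmodType K) (x1 x2 x3 x4 x5 x6 : V) :
  x5 = lin (x1,x2,x3,x4,x5,x6) 0 0 0 0 1 0.
Proof. by rewrite /lin /= scale1r !scale0r !addr0 !add0r. Qed.
Lemma lin6 (K : fieldType) (V : lmodType K) (x1 x2 x3 x4 x5 x6 : V) :
  x6 = lin (x1,x2,x3,x4,x5,x6) 0 0 0 0 0 1.
Proof. by rewrite /lin /= scale1r !scale0r !add0r. Qed.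
Ltac linsolve x1 x2 x3 x4 x5 x6 :=
  let W := fresh "W" in pose W := (x1,x2,x3,x4,x5,x6);
  try (rewrite (lin1 x1 x2 x3 x4 x5 x6) -/W);
  try (rewrite (lin2 x1 x2 x3 x4 x5 x6) -/W);
  try (rewrite (lin3 x1 x2 x3 x4 x5 x6) -/W);
  try (rewrite (lin4 x1 x2 x3 x4 x5 x6) -/W);
  try (rewrite (lin5 x1 x2 x3 x4 x5 x6) -/W);
  try (rewrite (lin6 x1 x2 x3 x4 x5 x6) -/W);
  rewrite ?linN ?linZ ?linD ?linN ?linZ ?linD; apply: linE.

Lemma psinv_size (R : nzRingType) (a : ps R) n : size (psinv_seq a n) = n.+1.
Proof. by elim: n => //= n IH; rewrite size_rcons IH. Qed.

Lemma psinv_nth (R : nzRingType) (a : ps R) n k :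
  (k <= n)%N -> nth 0 (psinv_seq a n) k = psinv a k.
Proof.
elim: n => [|n IH]; first by rewrite leqn0 => /eqP ->.
rewrite leq_eqVlt => /orP [/eqP -> //| hk].
by rewrite /= nth_rcons psinv_size hk IH.
Qed.

Lemma psinv_rec (R : nzRingType) (a : ps R) n :
  psinv a n.+1 = - \sum_(k < n.+1) a (n.+1 - k)%N * psinv a k.
Proof.
rewrite /psinv /= nth_rcons psinv_size ltnn eqxx; congr (- _).
by apply: eq_bigr => k _; rewrite psinv_nth // -ltnS.
Qed.

Lemma psinv0 (R : nzRingType) (a : ps R) : psinv a 0 = 1.
Proof. by []. Qed.

Lemma psinv_geom (R : nzRingType) (a : ps R) (u : R) :
  a 0%N = 1 -> a 1%N = - u -> (forall n, (1 < n)%N -> a n = 0) ->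
  forall n, psinv a n = u ^+ n.
Proof.
move=> a0 a1 a2; elim=> [|n IH]; first by rewrite psinv0 expr0.
rewrite psinv_rec big_ord_recr /= subSnn a1 IH big1 ?add0r ?mulNr ?opprK ?exprS //.
move=> [i hi] _ /=; rewrite a2 ?mul0r //.
by rewrite subSn ?ltnS ?subn_gt0 // ltnW.
Qed.

Lemma psmulCl (R : nzRingType) (x : R) (g : ps R) n :
  psmul (psC x) g n = x * g n.
Proof.
rewrite /psmul big_ord_recl /= subn0 big1 ?addr0 // => i _.
by rewrite /psC /= mul0r.
Qed.

Lemma psmulCr (R : nzRingType) (x : R) (f : ps R) n :
  psmul f (psC x) n = f n * x.
Proof.
rewrite /psmul big_ord_recr /= subnn big1 ?add0r // => [[i hi]] _ /=.
by rewrite /psC; case: (n - i)%N (subn_gt0 i n) => [|m]; rewrite ?hi ?mulr0.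
Qed.

Lemma psmulS (R : nzRingType) (f g : ps R) n :
  psmul f g n.+1 = f 0%N * g n.+1 + \sum_(i < n.+1) f i.+1 * g (n - i)%N.
Proof. by rewrite /psmul big_ord_recl subn0. Qed.

Lemma pre (K : fieldType) (A : algType K) (x y r : A) : x * y = r -> forall a, a * x * y = a * r.
Proof. by move=> h a; rewrite -mulrA h. Qed.

Lemma oppDA (K : fieldType) (A : algType K) (x y : A) : -(x + y) = -x - y.
Proof. exact: opprD. Qed.

Ltac fin h1 h2 h3 := first [ by rewrite ?mulr0 ?mul0r ?mulr1 ?mul1r | by ring | (field; by rewrite ?h1 ?h2 ?h3) ].

Ltac norm := repeat progress rewrite ?mulrDl ?mulrDr ?mulrBl ?mulrBr -?scalerAl -?scalerAr
   ?mulrA ?scalerA ?scalerDr ?scalerBr ?mulNr ?mulrN ?scalerN ?oppDA ?opprK ?mulr1 ?mul1r.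

Unset Implicit Arguments.

Theorem mainTheorem5 (K : fieldType) (A : algType K) (e : K -> K)
    (E1 E2 F1 F2 : A) (Q : K -> K -> K -> A) :
  is_qexp e ->
  qq e ^+ 2 != 1 ->
  qint2 e != 0 ->
  Uqgl3_rel e E1 E2 F1 F2 Q ->
  let c := - (qq e)^-2 in
  [/\ B0 e E2 F1 F2 Q = F1 * Q (-1) (-1) 0,
      (forall n, Ealpha e E1 E2 F1 F2 Q n =
         psscale (kappa e)^-1
           (psmul (psC (N'21 e E1)) (psinv (pssubst c (N'11 Q)))) n),
      (forall n, Edeltaalpha e E1 E2 F1 F2 Q n =
         psscale ((kappa e)^-1 * (qq e)^-1)
           (psmul (psinv (pssubst c (N'11 Q))) (psC (N'12 e F1 Q))) n) &
      (forall n,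
         psadd (ps1 A) (psscale (kappa e) (E'alpha e E1 E2 F1 F2 Q)) n =
         psmul (psinv (pssubst c (N'11 Q)))
               (pssubst c (N''22 e E1 F1 Q)) n)].
Proof.
case=> e0 eD hq2 hint [Q0 QD Qc [c11 c22 c12 c21] _] c.
rewrite /kappa /qint2 in hint c11 c22 *.
set q := qq e in hq2 hint c11 c22 c *.
have hq : q != 0.
  apply/eqP=> h0; move: (eD 1 (-1)); rewrite addrN e0 -/(qq e) -/q h0 mul0r.
  by move/eqP; rewrite oner_eq0.
have hk : q - q^-1 != 0.
  apply: contra hq2; rewrite subr_eq0 => /eqP h.
  by rewrite expr2 {1}h mulVf.
have hqq : q * q - 1 != 0 by rewrite subr_eq0 -expr2.
have hqp : q * q + 1 != 0.
  apply: contra hint => /eqP h; apply/eqP.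
  by apply: (mulfI hq); rewrite mulr0 mulrDr mulfV // h.
have eN1 : e (-1) = q^-1.
  by apply: (mulfI hq); rewrite mulfV // /q /qq -eD addrN e0.
have ev : forall x y, x = y -> e x = e y by move=> x y ->.
have Qinv : forall x1 x2 x3, Q (-x1) (-x2) (-x3) * Q x1 x2 x3 = 1.
  by move=> *; rewrite -QD !addNr Q0.
have cE1 x1 x2 x3 : Q x1 x2 x3 * E1 = e (x1 - x2) *: (E1 * Q x1 x2 x3).
  by have [h _ _ _] := Qc x1 x2 x3; rewrite -[LHS]mulr1 -(Qinv x1 x2 x3) mulrA h scalerAl.
have cE2 x1 x2 x3 : Q x1 x2 x3 * E2 = e (x2 - x3) *: (E2 * Q x1 x2 x3).
  by have [_ h _ _] := Qc x1 x2 x3; rewrite -[LHS]mulr1 -(Qinv x1 x2 x3) mulrA h scalerAl.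
have cF1 x1 x2 x3 : Q x1 x2 x3 * F1 = e (- (x1 - x2)) *: (F1 * Q x1 x2 x3).
  by have [_ _ h _] := Qc x1 x2 x3; rewrite -[LHS]mulr1 -(Qinv x1 x2 x3) mulrA h scalerAl.
have cF2 x1 x2 x3 : Q x1 x2 x3 * F2 = e (- (x2 - x3)) *: (F2 * Q x1 x2 x3).
  by have [_ _ _ h] := Qc x1 x2 x3; rewrite -[LHS]mulr1 -(Qinv x1 x2 x3) mulrA h scalerAl.
have partI : B0 e E2 F1 F2 Q = F1 * Q (-1) (-1) 0.
{
  have RE2 : Q (-1) 0 (-1) * E2 = q *: (E2 * Q (-1) 0 (-1)).
    by rewrite cE2 (ev _ 1) //; ring.
  have K2F1 : Q 0 1 (-1) * F1 = q *: (F1 * Q 0 1 (-1)).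
    by rewrite cF1 (ev _ 1) //; ring.
  have K2iF1 : Q 0 (-1) 1 * F1 = q^-1 *: (F1 * Q 0 (-1) 1).
    by rewrite cF1 (ev _ (-1)) ?eN1 //; ring.
  have E2F1 : E2 * F1 = F1 * E2 by apply/eqP; rewrite -subr_eq0 c21.
  have E2F2 : E2 * F2 = F2 * E2 + (q - q^-1)^-1 *: (Q 0 1 (-1) - Q 0 (-1) 1).
    by rewrite -c22 addrC subrK.
  have K2iR : Q 0 (-1) 1 * Q (-1) 0 (-1) = Q (-1) (-1) 0.
    by rewrite -QD; congr Q; ring.
  have K2R : Q 0 1 (-1) * Q (-1) 0 (-1) = Q (-1) 1 (-2).
    by rewrite -QD; congr Q; ring.
  rewrite /B0 /F3 -/q; norm.
  do 10 (rewrite ?(RE2, pre RE2, K2F1, pre K2F1, K2iF1, pre K2iF1, E2F1, pre E2F1, E2F2, pre E2F2, K2iR, pre K2iR, K2R, pre K2R); norm).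
  have z : A := 0.
  linsolve (F2 * F1 * E2 * Q (-1) 0 (-1)) (F1 * F2 * E2 * Q (-1) 0 (-1)) (F1 * Q (-1) 1 (-2)) (F1 * Q (-1) (-1) 0) z z.
  all: fin hq hqq hqp.
}

have PE1 : Q (-1) (-1) 0 * E1 = E1 * Q (-1) (-1) 0.
  by rewrite cE1 (ev _ 0) ?e0 ?scale1r //; ring.
have PF1 : Q (-1) (-1) 0 * F1 = F1 * Q (-1) (-1) 0.
  by rewrite cF1 (ev _ 0) ?e0 ?scale1r //; ring.
have eN2 : e (-2) = q^-1 * q^-1 by rewrite (ev _ (-1 + -1)) ?eD ?eN1 //; ring.
have e2 : e 2 = q * q by rewrite (ev _ (1 + 1)) ?eD //; ring.
have ME1 : Q (-2) 0 0 * E1 = (q^-1 * q^-1) *: (E1 * Q (-2) 0 0).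
  by rewrite cE1 (ev _ (-2)) ?eN2 //; ring.
have MF1 : Q (-2) 0 0 * F1 = (q * q) *: (F1 * Q (-2) 0 0).
  by rewrite cF1 (ev _ 2) ?e2 //; ring.
have K1E1 : Q 1 (-1) 0 * E1 = (q * q) *: (E1 * Q 1 (-1) 0).
  by rewrite cE1 (ev _ 2) ?e2 //; ring.
have K1iE1 : Q (-1) 1 0 * E1 = (q^-1 * q^-1) *: (E1 * Q (-1) 1 0).
  by rewrite cE1 (ev _ (-2)) ?eN2 //; ring.
have K1F1 : Q 1 (-1) 0 * F1 = (q^-1 * q^-1) *: (F1 * Q 1 (-1) 0).
  by rewrite cF1 (ev _ (-2)) ?eN2 //; ring.
have K1iF1 : Q (-1) 1 0 * F1 = (q * q) *: (F1 * Q (-1) 1 0).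
  by rewrite cF1 (ev _ 2) ?e2 //; ring.
have E1F1 : E1 * F1 = F1 * E1 + (q - q^-1)^-1 *: (Q 1 (-1) 0 - Q (-1) 1 0).
  by rewrite -c11 addrC subrK.
have K1P : Q 1 (-1) 0 * Q (-1) (-1) 0 = Q 0 (-2) 0.
  by rewrite -QD; congr Q; ring.
have K1iP : Q (-1) 1 0 * Q (-1) (-1) 0 = Q (-2) 0 0.
  by rewrite -QD; congr Q; ring.
have PM : Q (-1) (-1) 0 * Q (-2) 0 0 = Q (-2) 0 0 * Q (-1) (-1) 0.
  by rewrite -!QD; congr Q; ring.
have hX : Xel e E1 E2 F1 F2 Q =
    E1 * (F1 * Q (-1) (-1) 0) - (q^-1 * q^-1) *: (F1 * Q (-1) (-1) 0 * E1).
  by rewrite /Xel /A0 partI -/q expr2 invfM.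
have X3 : E1 * Xel e E1 E2 F1 F2 Q - Xel e E1 E2 F1 F2 Q * E1 =
    ((q + q^-1) * c) *: (E1 * Q (-2) 0 0).
{ rewrite hX /c; norm.
  do 6 (rewrite ?(E1F1, pre E1F1, K1E1, pre K1E1, K1iE1, pre K1iE1, PE1, pre PE1,
     K1P, pre K1P, K1iP, pre K1iP); norm).
  have z : A := 0.
  linsolve (F1 * E1 * E1 * Q (-1) (-1) 0) (E1 * Q 0 (-2) 0) (E1 * Q (-2) 0 0) z z z.
  all: fin hq hqq hqp. }
have X4 : Xel e E1 E2 F1 F2 Q * F1 - F1 * Xel e E1 E2 F1 F2 Q =
    ((q + q^-1) * c) *: (Q (-2) 0 0 * F1).
{ rewrite hX /c; norm.
  do 6 (rewrite ?(E1F1, pre E1F1, K1F1, pre K1F1, K1iF1, pre K1iF1, PE1, pre PE1, PF1, pre PF1,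
     K1P, pre K1P, K1iP, pre K1iP, MF1); norm).
  have z : A := 0.
  linsolve (F1 * F1 * E1 * Q (-1) (-1) 0) (F1 * Q 0 (-2) 0) (F1 * Q (-2) 0 0) z z z.
  all: fin hq hqq hqp. }
have X2 : Xel e E1 E2 F1 F2 Q * Q (-2) 0 0 = Q (-2) 0 0 * Xel e E1 E2 F1 F2 Q.
{ rewrite hX; norm.
  do 6 (rewrite ?(ME1, pre ME1, MF1, pre MF1, PE1, pre PE1, PM, pre PM); norm).
  have z : A := 0.
  linsolve (E1 * F1 * Q (-2) 0 0 * Q (-1) (-1) 0) (F1 * E1 * Q (-2) 0 0 * Q (-1) (-1) 0) z z z z.
  all: fin hq hqq hqp. }
have XP : Xel e E1 E2 F1 F2 Q * Q (-1) (-1) 0 = Q (-1) (-1) 0 * Xel e E1 E2 F1 F2 Q.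
{ rewrite hX; norm.
  do 6 (rewrite ?(PE1, pre PE1, PF1, pre PF1); norm).
  have z : A := 0.
  linsolve (E1 * F1 * Q (-1) (-1) 0 * Q (-1) (-1) 0) (F1 * E1 * Q (-1) (-1) 0 * Q (-1) (-1) 0) z z z z.
  all: fin hq hqq hqp. }
have psS : forall n, psinv (pssubst c (N'11 Q)) n = (c *: Q (-2) 0 0)^+n.
  apply: psinv_geom.
  - by rewrite /pssubst /= expr0 scale1r.
  - by rewrite /pssubst /= expr1 scalerN.
  - by case=> [|[|n]] //= _; rewrite /pssubst scaler0.
have psN : forall n, psinv (N'11 Q) n = Q (-2) 0 0 ^+ n.
  by apply: psinv_geom => //; case=> [|[|n]].
have cW : forall n, Xel e E1 E2 F1 F2 Q * (c *: Q (-2) 0 0)^+n =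
    (c *: Q (-2) 0 0)^+n * Xel e E1 E2 F1 F2 Q.
  move=> n; apply: commrX.
  by rewrite /GRing.comm -scalerAr X2 scalerAl.
have partII : forall n, Ak e E1 E2 F1 F2 Q n = E1 * (c *: Q (-2) 0 0)^+n.
{ elim=> [|n IH] /=; first by rewrite expr0 mulr1.
  rewrite IH exprS /qint2 -/q -mulrA -cW !mulrA -mulrBl X3.
  norm. have z : A := 0.
  linsolve (E1 * Q (-2) 0 0 * (c *: Q (-2) 0 0)^+n) z z z z z.
  all: rewrite /c; fin hq hqq hqp. }
have partIII : forall n, Bk e E1 E2 F1 F2 Q n = (c *: Q (-2) 0 0)^+n * (F1 * Q (-1) (-1) 0).
{ elim=> [|n IH] /=; first by rewrite expr0 mul1r partI.
  rewrite IH exprSr /qint2 -/q !mulrA cW.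
  rewrite -(mulrA _ (Q (-1) (-1) 0)) -XP mulrA.
  have -> : forall W X : A, W * X * F1 * Q (-1) (-1) 0 -
      W * F1 * X * Q (-1) (-1) 0 = W * (X * F1 - F1 * X) * Q (-1) (-1) 0.
    by move=> W X; rewrite mulrBr mulrBl !mulrA.
  rewrite X4. norm. have z : A := 0.
  linsolve ((c *: Q (-2) 0 0)^+n * Q (-2) 0 0 * F1 * Q (-1) (-1) 0) z z z z z.
  all: rewrite /c; fin hq hqq hqp. }
have VF1 : forall m, Q (-2) 0 0 ^+ m * F1 = (q * q) ^+ m *: (F1 * Q (-2) 0 0 ^+ m).
  elim=> [|m IH]; first by rewrite !expr0 mulr1 mul1r scale1r.
  rewrite !exprS (pre IH); norm; rewrite MF1; norm; congr (_ *: _); ring.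
have PV : forall m, Q (-1) (-1) 0 * Q (-2) 0 0 ^+ m = Q (-2) 0 0 ^+ m * Q (-1) (-1) 0.
  by move=> m; apply: commrX; exact: PM.
have R0 : psmul (psinv (pssubst c (N'11 Q))) (pssubst c (N''22 e E1 F1 Q)) 0 = 1.
  by rewrite /psmul big_ord1 psS expr0 mul1r /pssubst expr0 scale1r /N''22 /psadd /psopp /psshift /N'22 /= oppr0 addr0.
have Rrec : forall n,
    psmul (psinv (pssubst c (N'11 Q))) (pssubst c (N''22 e E1 F1 Q)) n.+1 =
    c ^+ n.+1 *: N''22 e E1 F1 Q n.+1 +
    (c *: Q (-2) 0 0) * psmul (psinv (pssubst c (N'11 Q))) (pssubst c (N''22 e E1 F1 Q)) n.
  move=> n; rewrite psmulS psS expr0 mul1r; congr (_ + _).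
  rewrite /psmul mulr_sumr; apply: eq_bigr => i _.
  by rewrite !psS exprS mulrA.
have N1 : N''22 e E1 F1 Q 1 = - Q 0 (-2) 0 - N'21 e E1 * N'12 e F1 Q.
  by rewrite /N''22 /psadd /psopp /psshift /= psmulCr psmulCl psN expr0 mulr1 /N'22.
have N2 : forall k, N''22 e E1 F1 Q k.+2 = - (N'21 e E1 * Q (-2) 0 0 ^+ k.+1 * N'12 e F1 Q).
  by move=> k; rewrite /N''22 /psadd /psopp /psshift /= psmulCr psmulCl psN /N'22 add0r.
have LHSn : forall m, psadd (ps1 A) (psscale (q - q^-1) (E'alpha e E1 E2 F1 F2 Q)) m.+1 =
    (q - q^-1) *: (Ak e E1 E2 F1 F2 Q m * B0 e E2 F1 F2 Q -
      (q^-1 * q^-1) *: (B0 e E2 F1 F2 Q * Ak e E1 E2 F1 F2 Q m)).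
  by move=> m; rewrite /psadd /ps1 /psC /psscale /E'alpha /psshift /Ealpha add0r -/q expr2 invfM.
split.
- exact: partI.
- move=> n; rewrite /Ealpha partII /psscale psmulCl psS /N'21 /kappa -/q.
  by rewrite -scalerAl scalerA mulVf // scale1r.
- { move=> n; rewrite /Edeltaalpha partIII /psscale psmulCr psS /N'12 /kappa -/q.
  norm. have z : A := 0.
  linsolve ((c *: Q (-2) 0 0)^+n * F1 * Q (-1) (-1) 0) z z z z z.

  all: fin hq hqq hqp. }
case=> [|m].
  by rewrite R0 /psadd /ps1 /psC /psscale /E'alpha /psshift scaler0 addr0.
rewrite LHSn; elim: m => [|m IH].
{ rewrite Rrec R0 mulr1 N1 partI /Ak /A0 /N'21 /N'12 /kappa -/q /c.
  norm.
  do 6 (rewrite ?(E1F1, pre E1F1, PE1, pre PE1, K1P, pre K1P, K1iP, pre K1iP); norm).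
  have z : A := 0.
  linsolve (F1 * E1 * Q (-1) (-1) 0) (Q 0 (-2) 0) (Q (-2) 0 0) z z z.
  all: fin hq hqq hqp. }
rewrite Rrec -IH N2 !partII partI !exprZn !exprS /N'21 /N'12 /kappa -/q.
move: (Q (-2) 0 0 ^+ m) (VF1 m) (PV m) => V VF1m PVm.
rewrite /c; norm.
do 8 (rewrite ?(ME1, pre ME1, MF1, pre MF1, VF1m, pre VF1m, PE1, pre PE1, PM, pre PM,
   PVm, pre PVm); norm).
have z : A := 0.
linsolve (E1 * F1 * Q (-2) 0 0 * V * Q (-1) (-1) 0) (F1 * E1 * Q (-2) 0 0 * V * Q (-1) (-1) 0) z z z z.
all: fin hq hqq hqp.
Qed.
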